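(* Let $(X,\tau,I)$ be a $*$-extremally disconnected ideal topological space and $\gamma$ an operation on $\tau$ such that $(X,\tau)$ is $\gamma$-regular. For $V\subseteq X$ the following are equivalent: (1) $V$ is $\gamma$-open; (2) $V$ is $\alpha$-$I$-open and weakly $I$-local closed; (3) $V$ is pre-$\gamma$-$I$-open and weakly $I$-local closed; (4) $V$ is pre-$I$-open and weakly $I$-local closed; (5) $V$ is semi-$I$-open and weakly $I$-local closed; (6) $V$ is $b$-$I$-open and weakly $I$-local closed.
   Context: Let $(X,\tau)$ be a topological space; $Cl$ and $Int$ denote closure and interior in $\tau$. An ideal on $X$ is a nonempty family $I$ of subsets of $X$ such that $A\in I$, $B\subseteq A$ imply $B\in I$, and $A,B\in I$ imply $A\cup B\in I$; $(X,\tau,I)$ is then called an ideal topological space. An operation on $\tau$ is a map $\gamma:\tau\to P(X)$ with $V\subseteq\gamma(V)$ for all $V\in\tau$. A subset $A\subseteq X$ is $\gamma$-open if for every $x\in A$ there is $U\in\tau$ with $x\in U$ and $\gamma(U)\subseteq A$; $\tau_\gamma$ denotes the family of $\gamma$-open sets (so $\tau_\gamma\subseteq\tau$), and complements of $\gamma$-open sets are $\gamma$-closed. $\tau_\gamma\text{-}Int(A)$ is the union of all $\gamma$-open sets contained in $A$, and $\tau_\gamma\text{-}Cl(A)$ is the intersection of all $\gamma$-closed sets containing $A$. The local function of $A$ is $A^*=\{x\in X: U\cap A\notin I \text{ for every } U\in\tau \text{ with } x\in U\}$, and $Cl^*(A)=A\cup A^*$ (the closure operator of a topology $\tau^*$ finer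 than $\tau$). A subset $A$ is pre-$\gamma$-$I$-open if $A\subseteq \tau_\gamma\text{-}Int(Cl^*(A))$. The space $(X,\tau)$ is $\gamma$-regular if for each $x\in X$ and each open $V$ containing $x$ there is an open $U$ containing $x$ with $\gamma(U)\subseteq V$ (equivalently, $\tau_\gamma=\tau$). $(X,\tau,I)$ is $*$-extremally disconnected if $Cl^*(V)$ is open for every open $V\subseteq X$ (equivalently, $Cl^*(Int(V))\subseteq Int(Cl^*(V))$ for every $V\subseteq X$). A set $A$ is: $\alpha$-$I$-open if $A\subseteq Int(Cl^*(Int(A)))$; pre-$I$-open if $A\subseteq Int(Cl^*(A))$; semi-$I$-open if $A\subseteq Cl^*(Int(A))$; $b$-$I$-open if $A\subseteq Int(Cl^*(A))\cup Cl^*(Int(A))$; weakly $I$-local closed if $A=U\cap K$ for some open $U$ and some $\tau^*$-closed $K$ (i.e. $K^*\subseteq K$). *)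

(* Defs.v *)
From Stdlib Require Import Classical.

Set Implicit Arguments.

Section Defs.
Variable X : Type.

Definition subset (A B : X -> Prop) : Prop := forall x, A x -> B x.
Definition setI (A B : X -> Prop) : X -> Prop := fun x => A x /\ B x.
Definition setU (A B : X -> Prop) : X -> Prop := fun x => A x \/ B x.

(* tau is a topology on X (families of subsets are taken up to extensional equality). *)
Definition is_topology (tau : (X -> Prop) -> Prop) : Prop :=
  (forall U V, (forall x, U x <-> V x) -> tau U -> tau V) /\
  tau (fun _ => True) /\
  (forall F : (X -> Prop) -> Prop,
      (forall U, F U -> tau U) -> tau (fun x => exists U, F U /\ U x)) /\
  (forall U V, tau U -> tau V -> tau (setI U V)).

Definition is_ideal (I : (X -> Prop) -> Prop) : Prop :=
  (exists A, I A) /\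
  (forall A B, I A -> subset B A -> I B) /\
  (forall A B, I A -> I B -> I (setU A B)).

Variable tau : (X -> Prop) -> Prop.
Variable I : (X -> Prop) -> Prop.
Variable gamma : (X -> Prop) -> (X -> Prop).

Definition is_operation : Prop := forall V, tau V -> subset V (gamma V).

Definition Int (A : X -> Prop) : X -> Prop :=
  fun x => exists U, tau U /\ U x /\ subset U A.

Definition Cl (A : X -> Prop) : X -> Prop :=
  fun x => forall U, tau U -> U x -> exists y, U y /\ A y.

Definition gamma_open (A : X -> Prop) : Prop :=
  forall x, A x -> exists U, tau U /\ U x /\ subset (gamma U) A.

Definition gamma_Int (A : X -> Prop) : X -> Prop :=
  fun x => exists W, gamma_open W /\ W x /\ subset W A.

Definition star (A : X -> Prop) : X -> Prop :=
  fun x => forall U, tau U -> U x -> ~ I (setI U A).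

Definition Clstar (A : X -> Prop) : X -> Prop := setU A (star A).

Definition pre_gamma_I_open (A : X -> Prop) : Prop :=
  subset A (gamma_Int (Clstar A)).

Definition gamma_regular : Prop :=
  forall x V, tau V -> V x -> exists U, tau U /\ U x /\ subset (gamma U) V.

Definition star_extremally_disconnected : Prop :=
  forall V, tau V -> tau (Clstar V).

Definition alpha_I_open (A : X -> Prop) : Prop :=
  subset A (Int (Clstar (Int A))).
Definition pre_I_open (A : X -> Prop) : Prop :=
  subset A (Int (Clstar A)).
Definition semi_I_open (A : X -> Prop) : Prop :=
  subset A (Clstar (Int A)).
Definition b_I_open (A : X -> Prop) : Prop :=
  subset A (setU (Int (Clstar A)) (Clstar (Int A))).

Definition weakly_I_local_closed (A : X -> Prop) : Prop :=
  exists U K, tau U /\ subset (star K) K /\ (forall x, A x <-> (U x /\ K x)).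

End Defs.

(* Main.v *)
Require Import Defs.

Section H.
Variables (X : Type) (tau : (X -> Prop) -> Prop) (I : (X -> Prop) -> Prop)
  (gamma : (X -> Prop) -> (X -> Prop)).
Hypotheses (Htop : is_topology tau) (HI : is_ideal I) (Hop : is_operation tau gamma)
  (Hed : star_extremally_disconnected tau I) (Hreg : gamma_regular tau gamma).

Definition lopen (V : X -> Prop) := forall x, V x -> exists U, tau U /\ U x /\ subset U V.

Lemma go_lopen V : gamma_open tau gamma V <-> lopen V.
Proof.
  split.
  - intros H x Hx. destruct (H x Hx) as [U [HU [Ux HG]]].
    exists U; split; [|split]; auto. intros y Hy. apply HG, Hop; auto.
  - intros H x Hx. destruct (H x Hx) as [U [HU [Ux HG]]].
    destruct (Hreg x U HU Ux) as [W [HW [Wx HWs]]].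
    exists W; split; [|split]; auto. intros y Hy; apply HG, HWs; auto.
Qed.

Lemma star_mono A B : subset A B -> subset (star tau I A) (star tau I B).
Proof.
  destruct HI as [_ [Hd _]].
  intros HAB x Hx U HU Ux HIB. apply (Hx U HU Ux).
  apply (Hd _ _ HIB). intros y [H1 H2]; split; auto.
Qed.

Lemma key V : weakly_I_local_closed tau I V ->
  (forall x, V x -> exists W, tau W /\ W x /\ subset W (Clstar tau I V)) -> lopen V.
Proof.
  intros [U [K [HU [HK HV]]]] H x Hx.
  destruct (H x Hx) as [W [HW [Wx HWs]]].
  destruct Htop as [_ [_ [_ Hint]]].
  exists (setI W U). split; [apply Hint; auto|]. split.
  - split; auto. apply HV; auto.
  - intros y [Wy Uy]. apply HV. split; auto.
    destruct (HWs y Wy) as [Vy | Sy].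
    + apply HV; auto.
    + apply HK. refine (star_mono V K _ y Sy). intros z Hz; apply HV; auto.
Qed.

Lemma bkey V : weakly_I_local_closed tau I V -> b_I_open tau I V -> lopen V.
Proof.
  intros Hw Hb. apply key; auto. intros x Hx.
  destruct (Hb x Hx) as [[W [HW [Wx HWs]]] | Hc].
  - exists W; auto.
  - exists (Clstar tau I (Int tau V)). split; [|split]; auto.
    + apply Hed. destruct Htop as [Hext [_ [Hun _]]].
      refine (Hext _ _ _ (Hun (fun U => tau U /\ subset U V) _)).
      * intros z; split.
        -- intros [U [[HU HUs] Uz]]. exists U; auto.
        -- intros [U [HU [Uz HUs]]]. exists U; auto.
      * intros U [HU _]; auto.
    + intros y [Hy | Hy].
      * left. destruct Hy as [U [_ [Uy HUs]]]; auto.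
      * right. refine (star_mono _ _ _ y Hy). intros z [U [_ [Uz HUs]]]; auto.
Qed.

Lemma fwd_wlc V : lopen V -> weakly_I_local_closed tau I V.
Proof.
  intros H. exists (fun x => exists U, (tau U /\ subset U V) /\ U x), (fun _ => True).
  split; [|split].
  - destruct Htop as [_ [_ [Hun _]]]. apply Hun. intros U [HU _]; auto.
  - intros y _; exact Logic.I.
  - intros x; split.
    + intros Hx. destruct (H x Hx) as [U [HU [Ux HUs]]]. split; [exists U|]; auto.
    + intros [[U [[_ HUs] Ux]] _]. auto.
Qed.

End H.

Theorem theorem3p34 (X : Type) (tau : (X -> Prop) -> Prop) (I : (X -> Prop) -> Prop)
  (gamma : (X -> Prop) -> (X -> Prop))
  (Htop : is_topology tau) (HI : is_ideal I) (Hop : is_operation tau gamma)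
  (Hed : star_extremally_disconnected tau I) (Hreg : gamma_regular tau gamma)
  (V : X -> Prop) :
  (gamma_open tau gamma V <-> alpha_I_open tau I V /\ weakly_I_local_closed tau I V) /\
  (gamma_open tau gamma V <-> pre_gamma_I_open tau I gamma V /\ weakly_I_local_closed tau I V) /\
  (gamma_open tau gamma V <-> pre_I_open tau I V /\ weakly_I_local_closed tau I V) /\
  (gamma_open tau gamma V <-> semi_I_open tau I V /\ weakly_I_local_closed tau I V) /\
  (gamma_open tau gamma V <-> b_I_open tau I V /\ weakly_I_local_closed tau I V).
Proof.
  pose proof (go_lopen X tau gamma Hop Hreg V) as E.
  assert (B : b_I_open tau I V -> weakly_I_local_closed tau I V -> gamma_open tau gamma V).
  { intros Hb Hw. apply E. apply (bkey X tau I Htop HI Hed); auto. }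
  split; [|split; [|split; [|split]]]; split.
  - intros Hg. pose proof (proj1 E Hg) as L. split; [|apply (fwd_wlc X tau I Htop); auto].
    intros x Hx. destruct (L x Hx) as [U [HU [Ux HUs]]].
    exists U; split; [|split]; auto. intros y Uy. left. exists U; auto.
  - intros [Ha Hw]. apply B; auto. intros x Hx. left.
    destruct (Ha x Hx) as [U [HU [Ux HUs]]]. exists U; split; [|split]; auto.
    intros y Uy. destruct (HUs y Uy) as [Hy | Hy].
    + left. destruct Hy as [W [_ [Wy HWs]]]; auto.
    + right. refine (star_mono X tau I HI _ _ _ y Hy). intros z [W [_ [Wz HWs]]]; auto.
  - intros Hg. split; [|apply (fwd_wlc X tau I Htop); apply E; auto].
    intros x Hx. exists V. split; [|split]; auto. intros y Hy; left; auto.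
  - intros [Hp Hw]. apply B; auto. intros x Hx. left.
    destruct (Hp x Hx) as [W [HW [Wx HWs]]].
    destruct (HW x Wx) as [U [HU [Ux HG]]].
    exists U; split; [|split]; auto. intros y Uy. apply HWs, HG, Hop; auto.
  - intros Hg. pose proof (proj1 E Hg) as L. split; [|apply (fwd_wlc X tau I Htop); auto].
    intros x Hx. destruct (L x Hx) as [U [HU [Ux HUs]]].
    exists U; split; [|split]; auto. intros y Uy. left; auto.
  - intros [Hp Hw]. apply B; auto. intros x Hx. left; auto.
  - intros Hg. pose proof (proj1 E Hg) as L. split; [|apply (fwd_wlc X tau I Htop); auto].
    intros x Hx. left. destruct (L x Hx) as [U [HU [Ux HUs]]]. exists U; auto.
  - intros [Hp Hw]. apply B; auto. intros x Hx. right; auto.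
  - intros Hg. pose proof (proj1 E Hg) as L. split; [|apply (fwd_wlc X tau I Htop); auto].
    intros x Hx. left. destruct (L x Hx) as [U [HU [Ux HUs]]].
    exists U; split; [|split]; auto. intros y Uy. left; auto.
  - intros [Hb Hw]. auto.
Qed.
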